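(* Let $X$ be a quasi-geodesic metric space and let $G\curvearrowright X$ be a cobounded quasi-action. Suppose that for $i=1,2$, $\rho_i:G\to\hat G_i$ are two topological completions of $G\curvearrowright X$. Then there exist compact normal subgroups $K_i\vartriangleleft\hat G_i$ ($i=1,2$) and an isomorphism of topological groups $\lambda:\hat G_1/K_1\to\hat G_2/K_2$ such that $\lambda\circ\pi_1\circ\rho_1=\pi_2\circ\rho_2$, where $\pi_i:\hat G_i\to\hat G_i/K_i$ are the quotient maps.
   Context: A metric space $X$ is quasi-geodesic if there are $K\ge1,A\ge0$ such that any two points can be joined by a chain $x_0,\dots,x_n$ with consecutive distances at most $A$ and $n\le Kd(x_0,x_n)+A$. A $(K,A)$-quasi-action of $G$ on $X$ assigns to each $g\in G$ a $(K,A)$-quasi-isometry $x\mapsto g\cdot x$ of $X$ with $d(h\cdot(g\cdot x),hg\cdot x)\le A$ and $d(e\cdot x,x)\le A$ for all $g,h,x$; it is cobounded if for some $r$, every $x,y$ admit $g$ with $d(g\cdot x,y)\le r$. A subset $T\subseteq G$ is bounded if $\{t\cdot x_0:t\in T\}$ is bounded for some (equivalently every) $x_0$. A topological completion is a homomorphism $\rho:G\to\hat G$ to a Hausdorff locally compact group with dense image such that for every $T\subseteq G$, $T$ is bounded iff $\overline{\rho(T)}$ is compact. *)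

(* Defs.v *)
From HB Require Import structures.
From mathcomp Require Import all_boot all_order all_algebra.
From mathcomp Require Import all_classical all_reals topology.
Set Implicit Arguments. Unset Strict Implicit. Unset Printing Implicit Defensive.
Import Order.TTheory GRing.Theory Num.Theory.
Local Open Scope classical_set_scope.
Local Open Scope ring_scope.

Record group_law (T : Type) := GroupLaw {
  gmul : T -> T -> T;
  ginv : T -> T;
  gone : T;
  gmulA : forall x y z, gmul x (gmul y z) = gmul (gmul x y) z;
  gmul1x : forall x, gmul gone x = x;
  gmulx1 : forall x, gmul x gone = x;
  gmulVx : forall x, gmul (ginv x) x = gone;
  gmulxV : forall x, gmul x (ginv x) = gone }.

Definition group_hom (T1 T2 : Type) (g1 : group_law T1) (g2 : group_law T2)
  (f : T1 -> T2) : Prop :=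
  forall x y, f (gmul g1 x y) = gmul g2 (f x) (f y).

Definition topgroup (T : topologicalType) (g : group_law T) : Prop :=
  continuous (fun p : T * T => gmul g p.1 p.2) /\ continuous (ginv g).

Definition subgroup (T : Type) (g : group_law T) (K : set T) : Prop :=
  K (gone g) /\ (forall x y, K x -> K y -> K (gmul g x (ginv g y))).

Definition normal_subgroup (T : Type) (g : group_law T) (K : set T) : Prop :=
  subgroup g K /\ (forall x k, K k -> K (gmul g (gmul g x k) (ginv g x))).

Definition coset (T : Type) (g : group_law T) (K : set T) (x : T) : set T :=
  [set gmul g x k | k in K].

Definition quot (T : Type) (g : group_law T) (K : set T) : Type :=
  {A : set T | exists x, A = coset g K x}.

Definition qmap (T : Type) (g : group_law T) (K : set T) (x : T) : quot g K :=
  exist _ (coset g K x) (ex_intro _ x erefl).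

Definition qopen (T : topologicalType) (g : group_law T) (K : set T)
  (U : set (quot g K)) : Prop := open (qmap g K @^-1` U).

(* isomorphism of topological groups G1/K1 -> G2/K2 (the group law on a
   quotient is the one induced by the projection: qmap x * qmap y = qmap (x*y)) *)
Definition quot_topgroup_iso (T1 T2 : topologicalType)
  (g1 : group_law T1) (g2 : group_law T2) (K1 : set T1) (K2 : set T2)
  (lam : quot g1 K1 -> quot g2 K2) : Prop :=
  (forall x y u v, lam (qmap g1 K1 x) = qmap g2 K2 u ->
     lam (qmap g1 K1 y) = qmap g2 K2 v ->
     lam (qmap g1 K1 (gmul g1 x y)) = qmap g2 K2 (gmul g2 u v)) /\
  exists mu : quot g2 K2 -> quot g1 K1,
    cancel lam mu /\ cancel mu lam /\
    (forall V, qopen V -> qopen (lam @^-1` V)) /\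
    (forall U, qopen U -> qopen (mu @^-1` U)).

Definition is_metric (R : realType) (X : Type) (d : X -> X -> R) : Prop :=
  (forall x y, 0 <= d x y) /\ (forall x y, d x y = 0 <-> x = y) /\
  (forall x y, d x y = d y x) /\ (forall x y z, d x z <= d x y + d y z).

Definition quasi_geodesic (R : realType) (X : Type) (d : X -> X -> R) : Prop :=
  exists (K A : R), 1 <= K /\ 0 <= A /\
  forall x y, exists (n : nat) (c : nat -> X),
    c 0%N = x /\ c n = y /\ (forall i, (i < n)%N -> d (c i) (c i.+1) <= A) /\
    n%:R <= K * d x y + A.

Definition quasi_isometry (R : realType) (X : Type) (d : X -> X -> R)
  (K A : R) (f : X -> X) : Prop :=
  (forall x y, K^-1 * d x y - A <= d (f x) (f y) /\ d (f x) (f y) <= K * d x y + A) /\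
  (forall y, exists x, d (f x) y <= A).

Definition quasi_action (R : realType) (X : Type) (d : X -> X -> R)
  (G : Type) (gG : group_law G) (act : G -> X -> X) : Prop :=
  exists (K A : R), 1 <= K /\ 0 <= A /\
  (forall g, quasi_isometry d K A (act g)) /\
  (forall g h x, d (act h (act g x)) (act (gmul gG h g) x) <= A) /\
  (forall x, d (act (gone gG) x) x <= A).

Definition cobounded (R : realType) (X : Type) (d : X -> X -> R)
  (G : Type) (act : G -> X -> X) : Prop :=
  exists r : R, forall x y, exists g, d (act g x) y <= r.

Definition qa_bounded (R : realType) (X : Type) (d : X -> X -> R)
  (G : Type) (act : G -> X -> X) (S : set G) : Prop :=
  exists (x0 : X) (r : R), forall t, S t -> d (act t x0) x0 <= r.

Definition topological_completion (R : realType) (X : Type) (d : X -> X -> R)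
  (G : Type) (gG : group_law G) (act : G -> X -> X)
  (H : topologicalType) (gH : group_law H) (rho : G -> H) : Prop :=
  topgroup gH /\ hausdorff_space H /\ locally_compact [set: H] /\
  group_hom gG gH rho /\ dense (range rho) /\
  (forall S : set G, qa_bounded d act S <-> compact (closure (rho @` S))).

(* Main.v *)
Require Import Defs.
From HB Require Import structures.
From mathcomp Require Import all_boot all_order all_algebra.
From mathcomp Require Import all_classical all_reals topology.
Set Implicit Arguments. Unset Strict Implicit. Unset Printing Implicit Defensive.
Local Open Scope classical_set_scope.

Section GroupFacts.
Variables (T : Type) (g : group_law T).
Local Notation "x * y" := (gmul g x y).
Local Notation "x ^-1" := (ginv g x).
Local Notation "1" := (gone g).

Lemma ginv1 : 1^-1 = 1.
Proof. by rewrite -[LHS](gmul1x g) gmulxV. Qed.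

Lemma ginv_uniq x y : x * y = 1 -> x = y^-1.
Proof.
move=> e; rewrite -[x](gmulx1 g) -(gmulxV g y) (gmulA g) e (gmul1x g) //.
Qed.

Lemma ginvK x : (x^-1)^-1 = x.
Proof. by symmetry; apply: ginv_uniq; rewrite gmulxV. Qed.

End GroupFacts.

Lemma hom1 (T1 T2 : Type) (g1 : group_law T1) (g2 : group_law T2) f :
  group_hom g1 g2 f -> f (gone g1) = gone g2.
Proof.
move=> h; have e : f (gone g1) = gmul g2 (f (gone g1)) (f (gone g1)).
  by rewrite -h gmul1x.
by rewrite -[LHS](gmul1x g2) -(gmulVx g2 (f (gone g1))) -gmulA -e.
Qed.

Lemma homV (T1 T2 : Type) (g1 : group_law T1) (g2 : group_law T2) f x :
  group_hom g1 g2 f -> f (ginv g1 x) = ginv g2 (f x).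
Proof.
move=> h; apply: ginv_uniq; rewrite -h gmulVx; exact: hom1.
Qed.

Lemma sig_eq (A : Type) (P : A -> Prop) (a b : {x | P x}) :
  proj1_sig a = proj1_sig b -> a = b.
Proof.
case: a => a pa; case: b => b pb /= e; subst; congr exist; exact: Prop_irrelevance.
Qed.

Lemma quot_surj (T : Type) (g : group_law T) (K : set T) (q : quot g K) :
  exists x, q = qmap g K x.
Proof. case: q => A [x e]; exists x; exact: sig_eq. Qed.

Lemma coset_self (T : Type) (g : group_law T) (K : set T) x :
  K (gone g) -> coset g K x x.
Proof. by move=> K1; exists (gone g) => //; rewrite gmulx1. Qed.

Lemma qmap_mem (T : Type) (g : group_law T) (K : set T) x y :
  K (gone g) -> qmap g K x = qmap g K y -> exists2 k, K k & y = gmul g x k.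
Proof.
move=> K1 /(congr1 (@proj1_sig _ _)) /= e.
have : coset g K x y by rewrite e; exact: coset_self.
by case=> k Kk <-; exists k.
Qed.

Lemma nbhs_open (T : topologicalType) (x : T) U :
  nbhs x U -> exists B, [/\ open B, B x & B `<=` U].
Proof. by rewrite nbhsE => -[B [oB Bx] BU]; exists B. Qed.

Lemma open_nbhs' (T : topologicalType) (x : T) B : open B -> B x -> nbhs x B.
Proof. by move=> oB Bx; apply: open_nbhs_nbhs. Qed.

Lemma mul_nbhs (T : topologicalType) (g : group_law T) : topgroup g ->
  forall x y U, nbhs (gmul g x y) U ->
  exists U1 U2, [/\ nbhs x U1, nbhs y U2 &
     forall a b, U1 a -> U2 b -> U (gmul g a b)].
Proof.
move=> [cm _] x y U nU.
have := cm (x, y) U nU; case=> -[U1 U2] /= [n1 n2] sub.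
exists U1, U2; split => // a b a1 b2; exact: (sub (a, b)).
Qed.

Lemma inv_nbhs (T : topologicalType) (g : group_law T) : topgroup g ->
  forall x U, nbhs (ginv g x) U -> nbhs x (ginv g @^-1` U).
Proof. by move=> [_ ci] x U nU; exact: ci. Qed.

Definition gam (G : Type) (H1 H2 : topologicalType) (r1 : G -> H1) (r2 : G -> H2)
  (x : H1) (y : H2) : Prop :=
  forall U V, nbhs x U -> nbhs y V -> exists g, U (r1 g) /\ V (r2 g).

Lemma gam_sym (G : Type) (H1 H2 : topologicalType) (r1 : G -> H1) (r2 : G -> H2) x y :
  gam r1 r2 x y -> gam r2 r1 y x.
Proof. move=> h U V nU nV; have [g [] ] := h V U nV nU; by exists g. Qed.

Section Gen.
Variables (G : Type) (gG : group_law G) (H1 H2 : topologicalType)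
  (g1 : group_law H1) (g2 : group_law H2) (r1 : G -> H1) (r2 : G -> H2).
Hypotheses (tg1 : topgroup g1) (tg2 : topgroup g2)
  (lc1 : locally_compact [set: H1])
  (hm1 : group_hom gG g1 r1) (hm2 : group_hom gG g2 r2)
  (dn1 : dense (range r1))
  (bnd : forall S : set G, compact (closure (r1 @` S)) -> compact (closure (r2 @` S))).

Local Notation gm := (gam r1 r2).

Lemma gam_r g : gm (r1 g) (r2 g).
Proof. by move=> U V nU nV; exists g; split; apply: nbhs_singleton. Qed.

Lemma gam_mul x y x' y' : gm x y -> gm x' y' -> gm (gmul g1 x x') (gmul g2 y y').
Proof.
move=> h h' U V nU nV.
have [U1 [U2 [n1 n2 sU]]] := mul_nbhs tg1 nU.
have [V1 [V2 [m1 m2 sV]]] := mul_nbhs tg2 nV.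
have [a [a1 a2]] := h _ _ n1 m1; have [b [b1 b2]] := h' _ _ n2 m2.
by exists (gmul gG a b); rewrite hm1 hm2; split; [apply: sU | apply: sV].
Qed.

Lemma gam_inv x y : gm x y -> gm (ginv g1 x) (ginv g2 y).
Proof.
move=> h U V nU nV.
have [a [a1 a2]] := h _ _ (inv_nbhs tg1 nU) (inv_nbhs tg2 nV).
by exists (ginv gG a); rewrite (homV _ hm1) (homV _ hm2).
Qed.

Lemma gam_one : gm (gone g1) (gone g2).
Proof. by rewrite -(hom1 hm1) -(hom1 hm2); exact: gam_r. Qed.

Lemma cluster_gam x (Y : set H1 -> set H2) :
  (forall U U', U `<=` U' -> Y U `<=` Y U') ->
  (forall U, nbhs x U -> Y U !=set0) ->
  (forall U, Y U `<=` [set y | exists2 x', U x' & gm x' y]) ->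
  exists z, gm x z /\ forall U V, nbhs x U -> nbhs z V -> Y U `&` V !=set0.
Proof.
move=> Ymono Yne Ysub.
have [C] := lc1 (I : [set: H1] x); rewrite withinET => nC [cC clC].
have [B [oB Bx BC]] := nbhs_open nC.
pose S := r1 @^-1` C.
have cS1 : compact (closure (r1 @` S)).
  apply: (subclosed_compact _ cC); first exact: closed_closure.
  rewrite (closure_id C).1 //; apply: closureS => _ [g Sg <-] //.
have cD := bnd cS1.
pose F := filter_from (nbhs x) Y.
have FF : Filter F.
  apply: filter_from_filter; first by exists setT; exact: filterT.
  move=> U U' nU nU'; exists (U `&` U'); first exact: filterI.
  by move=> y Yy; split; apply: Ymono Yy => ? [].
have PF : ProperFilter F by apply: filter_from_proper.
have FD : F (closure (r2 @` S)).
  exists B; first exact: open_nbhs'.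
  move=> y /Ysub [x' Bx' gxy] V nV.
  have [g [g1' g2']] := gxy _ _ (open_nbhs' oB Bx') nV.
  by exists (r2 g); split => //; exists g => //; apply: BC.
have [z [Dz clz]] := cD F PF FD.
have key : forall U V, nbhs x U -> nbhs z V -> Y U `&` V !=set0.
  by move=> U V nU nV; apply: clz => //; exists U.
exists z; split => // U V nU nV.
have [U0 [oU0 U0x U0U]] := nbhs_open nU.
have [V0 [oV0 V0z V0V]] := nbhs_open nV.
have [y [/Ysub [x' U0x' gxy] V0y]] := key _ _ (open_nbhs' oU0 U0x) (open_nbhs' oV0 V0z).
have [g [ga gb]] := gxy _ _ (open_nbhs' oU0 U0x') (open_nbhs' oV0 V0y).
by exists g; split; [apply: U0U | apply: V0V].
Qed.

Lemma gam_exists x : exists y, gm x y.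
Proof.
pose Y := fun U => r2 @` (r1 @^-1` U).
have h1 : forall U U', U `<=` U' -> Y U `<=` Y U'.
  by move=> U U' sU _ [g Ug <-]; exists g => //; apply: sU.
have h2 : forall U, nbhs x U -> Y U !=set0.
  move=> U nU; have [B [oB Bx BU]] := nbhs_open nU.
  have [y [By [g _ ey]]] := dn1 (ex_intro _ x Bx) oB; subst y.
  by exists (r2 g), g => //; apply: BU.
have h3 : forall U, Y U `<=` [set y | exists2 x', U x' & gm x' y].
  by move=> U _ [g Ug <-]; exists (r1 g) => //; exact: gam_r.
have [z [gz _]] := cluster_gam h1 h2 h3.
by exists z.
Qed.


Definition Kset (A B : topologicalType) (gB : group_law B) (s1 : G -> A) (s2 : G -> B) :=
  [set k | gam s1 s2 k (gone gB)].

Local Notation K1s := (Kset g2 r1 r2).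
Local Notation K2s := (Kset g1 r2 r1).

Lemma K2sE k : K2s k <-> gm (gone g1) k.
Proof. by split => [/gam_sym|/gam_sym]. Qed.

Lemma K1s_normal : normal_subgroup g1 K1s.
Proof.
split; first split.
- exact: gam_one.
- move=> x y Kx Ky; rewrite /Kset /= -[gone g2](gmulx1 g2) -{2}(ginv1 g2).
  by apply: gam_mul => //; apply: gam_inv.
- move=> x k Kk; have [y gxy] := gam_exists x.
  rewrite /Kset /= -(gmulxV g2 y) -{1}[y](gmulx1 g2).
  by apply: gam_mul; [apply: gam_mul|apply: gam_inv].
Qed.

Lemma K1s_compact (lc2 : locally_compact [set: H2])
  (bnd2 : forall S : set G, compact (closure (r2 @` S)) -> compact (closure (r1 @` S))) :
  compact K1s.
Proof.
have [C] := @lc2 (gone g2) I; rewrite withinET => nC [cC clC].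
have [B [oB Bx BC]] := nbhs_open nC.
pose S := r2 @^-1` C.
have cS2 : compact (closure (r2 @` S)).
  apply: (subclosed_compact _ cC); first exact: closed_closure.
  rewrite (closure_id C).1 //; apply: closureS => _ [g Sg <-] //.
have cD := bnd2 _ cS2.
apply: (subclosed_compact _ cD).
  move=> k clk U V nU nV.
  have [U0 [oU0 U0k U0U]] := nbhs_open nU.
  have [k' [Kk' U0k']] := clk _ (open_nbhs' oU0 U0k).
  have [g [ga gb]] := Kk' _ _ (open_nbhs' oU0 U0k') nV.
  by exists g; split => //; apply: U0U.
move=> k Kk U nU.
have [g [ga gb]] := Kk _ _ nU (open_nbhs' oB Bx).
by exists (r1 g); split => //; exists g => //; apply: BC.
Qed.

Lemma gam_coset x y y' : gm x y -> gm x y' ->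
  coset g2 K2s y `<=` coset g2 K2s y'.
Proof.
move=> h h' _ [k Kk <-]; move/K2sE: Kk => Kk.
have e : gm (gone g1) (gmul g2 (ginv g2 y') y).
  by rewrite -(gmulVx g1 x); apply: gam_mul => //; apply: gam_inv.
exists (gmul g2 (gmul g2 (ginv g2 y') y) k).
  by apply/K2sE; rewrite -(gmulx1 g1 (gone g1)); apply: gam_mul.
by rewrite !(gmulA g2) (gmulxV g2) (gmul1x g2).
Qed.

Definition lam (q : quot g1 K1s) : quot g2 K2s :=
  qmap g2 K2s (proj1_sig (cid (gam_exists (proj1_sig (cid (proj2_sig q)))))).

Lemma lam_spec x y : gm x y -> lam (qmap g1 K1s x) = qmap g2 K2s y.
Proof.
move=> gxy; rewrite /lam.
case: (cid (proj2_sig (qmap g1 K1s x))) => x0 /= e.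
case: (cid (gam_exists x0)) => y0 /= g0.
have : coset g1 K1s x x0 by rewrite e; apply: coset_self; exact: gam_one.
case=> k Kk ek.
have gx0 : gm x0 y.
  by rewrite -ek -[y](gmulx1 g2); apply: gam_mul.
apply: sig_eq => /=; rewrite eqEsubset; split; [exact: (gam_coset g0 gx0)|exact: (gam_coset gx0 g0)].
Qed.

Lemma lam_gam x u : lam (qmap g1 K1s x) = qmap g2 K2s u -> gm x u.
Proof.
move=> e; have [y0 g0] := gam_exists x; rewrite (lam_spec g0) in e.
have K1' : K2s (gone g2) by apply/K2sE; exact: gam_one.
have [k /K2sE Kk ->] := qmap_mem K1' e.
rewrite -[x](gmulx1 g1); exact: gam_mul.
Qed.

Lemma lam_hom x y u v : lam (qmap g1 K1s x) = qmap g2 K2s u ->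
  lam (qmap g1 K1s y) = qmap g2 K2s v ->
  lam (qmap g1 K1s (gmul g1 x y)) = qmap g2 K2s (gmul g2 u v).
Proof.
by move=> /lam_gam h /lam_gam h'; apply: lam_spec; apply: gam_mul.
Qed.

Lemma lam_cont V : qopen V -> qopen (lam @^-1` V).
Proof.
rewrite /qopen => oW.
pose O := [set x | V (lam (qmap g1 K1s x))].
rewrite openE => x Ox.
apply: contrapT => nO.
pose Y := fun U => [set y' | exists2 x', (U x' /\ ~ O x') & gm x' y'].
have h1 : forall U U', U `<=` U' -> Y U `<=` Y U'.
  by move=> U U' sU y' [x' [Ux' nx'] g']; exists x' => //; split => //; apply: sU.
have h2 : forall U, nbhs x U -> Y U !=set0.
  move=> U nU; have : ~ (U `<=` O).
    by move=> sUO; apply: nO; apply: filterS nU.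
  move=> /existsNP [x' /not_implyP [Ux' nOx']].
  have [y' g'] := gam_exists x'.
  by exists y', x'.
have h3 : forall U, Y U `<=` [set y | exists2 x', U x' & gm x' y].
  by move=> U y' [x' [Ux' _] g']; exists x'.
have [z [gz cl]] := cluster_gam h1 h2 h3.
have Wz : (qmap g2 K2s @^-1` V) z by rewrite /= -(lam_spec gz).
have nW : nbhs z (qmap g2 K2s @^-1` V) by apply: open_nbhs'.
have [y' [[x' [_ nOx'] g'] Wy']] := cl _ _ (@filterT _ _ _) nW.
by apply: nOx'; rewrite /O /= (lam_spec g').
Qed.

End Gen.
Unset Implicit Arguments. Set Strict Implicit.

Theorem theoremC (R : realType) (X : Type) (d : X -> X -> R)
  (G : Type) (gG : group_law G) (act : G -> X -> X)
  (H1 : topologicalType) (g1 : group_law H1) (rho1 : G -> H1)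
  (H2 : topologicalType) (g2 : group_law H2) (rho2 : G -> H2) :
  is_metric d -> quasi_geodesic d ->
  quasi_action d gG act -> cobounded d act ->
  topological_completion d gG act g1 rho1 ->
  topological_completion d gG act g2 rho2 ->
  exists (K1 : set H1) (K2 : set H2),
    compact K1 /\ normal_subgroup g1 K1 /\
    compact K2 /\ normal_subgroup g2 K2 /\
    exists lam : quot g1 K1 -> quot g2 K2,
      quot_topgroup_iso lam /\
      (forall g, lam (qmap g1 K1 (rho1 g)) = qmap g2 K2 (rho2 g)).
Proof.
move=> _ _ _ _ [tg1 [_ [lc1 [hm1 [dn1 bd1]]]]] [tg2 [_ [lc2 [hm2 [dn2 bd2]]]]].
have b12 : forall S : set G, compact (closure (rho1 @` S)) -> compact (closure (rho2 @` S)).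
  by move=> S c; apply/(bd2 S)/(bd1 S).
have b21 : forall S : set G, compact (closure (rho2 @` S)) -> compact (closure (rho1 @` S)).
  by move=> S c; apply/(bd1 S)/(bd2 S).
exists (Kset g2 rho1 rho2), (Kset g1 rho2 rho1).
split; first exact: (K1s_compact lc2 b21).
split; first exact: (K1s_normal tg1 tg2 lc1 hm1 hm2 dn1 b12).
split; first exact: (K1s_compact lc1 b12).
split; first exact: (K1s_normal tg2 tg1 lc2 hm2 hm1 dn2 b21).
exists (lam lc1 dn1 b12); split; last first.
  by move=> g; apply: (lam_spec tg1 tg2 lc1 hm1 hm2 dn1 b12); exact: gam_r.
split.
  by move=> x y u v; apply: (lam_hom tg1 tg2 hm1 hm2).
exists (lam lc2 dn2 b21); split; [|split; [|split]].
- move=> q; have [x ->] := quot_surj q.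
  have [y gxy] := gam_exists lc1 dn1 b12 x.
  rewrite (lam_spec tg1 tg2 lc1 hm1 hm2 dn1 b12 gxy).
  exact: (lam_spec tg2 tg1 lc2 hm2 hm1 dn2 b21 (gam_sym gxy)).
- move=> q; have [y ->] := quot_surj q.
  have [x gyx] := gam_exists lc2 dn2 b21 y.
  rewrite (lam_spec tg2 tg1 lc2 hm2 hm1 dn2 b21 gyx).
  exact: (lam_spec tg1 tg2 lc1 hm1 hm2 dn1 b12 (gam_sym gyx)).
- by move=> V; apply: (lam_cont tg1 tg2 lc1 hm1 hm2 dn1 b12).
- by move=> U; apply: (lam_cont tg2 tg1 lc2 hm2 hm1 dn2 b21).
Qed.
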